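(* Let $A=(a_{ij})\in\mathbb{R}^{n\times n}$ be symmetric positive definite, $b\in\mathbb{R}^n$, and let $x\in\mathbb{R}^n$ be a current approximation with residual $r=b-Ax=(r_1,\dots,r_n)^T$, assumed nonzero. Let $1\le m\le n$ and let $\mathcal{J}=\{i_1,\dots,i_m\}\subseteq\{1,\dots,n\}$ be a set of $m$ distinct indices consisting of the indices of $m$ components of $r$ with largest absolute value. Let $E=[e_{i_1},\dots,e_{i_m}]\in\mathbb{R}^{n\times m}$, where $e_j$ denotes the $j$-th column of the $n\times n$ identity matrix, set $y=(E^TAE)^{-1}E^Tr$ and $x_{new}=x+Ey$. Let $d=A^{-1}b-x$ and $d_{new}=A^{-1}b-x_{new}$. Then $$\|d\|_A^2-\|d_{new}\|_A^2\ \ge\ \frac{\sum_{k\in\mathcal{J}} r_k^2}{\sum_{k\in\mathcal{J}} a_{kk}},$$ and $$\|d_{new}\|_A\ \le\ \left(1-\frac{\lambda_{min}(A)}{\sum_{k\in\mathcal{J}} a_{kk}}\cdot\frac{\sum_{k\in\mathcal{J}} r_k^2}{\sum_{k=1}^{n} r_k^2}\right)^{1/2}\|d\|_A .$$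
   Context: For a vector $z$, $\|z\|_A=(Az,z)^{1/2}$ denotes the $A$-norm. $\lambda_{min}(A)$ denotes the smallest eigenvalue of $A$. The update $x_{new}=x+Ey$ is one step of the projection method with search and constraint space $\mathrm{span}\{e_{i_1},\dots,e_{i_m}\}$ (Petrov–Galerkin condition $r-AEy\perp \mathrm{span}\{e_{i_1},\dots,e_{i_m}\}$). *)

(* Defs.v *)
From mathcomp Require Import all_boot all_order all_algebra.
From mathcomp Require Import reals.
Set Implicit Arguments. Unset Strict Implicit. Unset Printing Implicit Defensive.
Import Order.TTheory GRing.Theory Num.Theory.
Local Open Scope ring_scope.

Definition spd (R : realType) (n : nat) (A : 'M[R]_n) : Prop :=
  A^T = A /\ forall z : 'cV[R]_n, z != 0 -> 0 < (z^T *m A *m z) ord0 ord0.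

Definition anorm2 (R : realType) (n : nat) (A : 'M[R]_n) (z : 'cV[R]_n) : R :=
  (z^T *m A *m z) ord0 ord0.

Definition anorm (R : realType) (n : nat) (A : 'M[R]_n) (z : 'cV[R]_n) : R :=
  Num.sqrt (anorm2 A z).

Definition is_lambda_min (R : realType) (n : nat) (A : 'M[R]_n) (l : R) : Prop :=
  eigenvalue A l /\ forall mu : R, eigenvalue A mu -> l <= mu.

Definition selmx (R : realType) (n m : nat) (f : 'I_m -> 'I_n) : 'M[R]_(n, m) :=
  \matrix_(i < n, k < m) (i == f k)%:R.

(* Main.v *)
Require Import Defs.
From mathcomp Require Import all_boot all_order all_algebra reals.
From mathcomp Require Import ring lra.
Import Order.TTheory GRing.Theory Num.Theory.
Local Open Scope ring_scope.

Set Implicit Arguments. Unset Strict Implicit.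
Section S.
Variable R : realType.

Definition dot {n} (u v : 'cV[R]_n) : R := \sum_i u i ord0 * v i ord0.

Lemma dotE n (u v : 'cV[R]_n) : dot u v = (u^T *m v) ord0 ord0.
Proof. by rewrite /dot !mxE; apply: eq_bigr => i _; rewrite mxE. Qed.

Lemma dotC n (u v : 'cV[R]_n) : dot u v = dot v u.
Proof. by apply: eq_bigr => i _; rewrite mulrC. Qed.

Lemma dotDl n (u w v : 'cV[R]_n) : dot (u + w) v = dot u v + dot w v.
Proof. by rewrite /dot -big_split; apply: eq_bigr => i _; rewrite mxE mulrDl. Qed.

Lemma dotNl n (u v : 'cV[R]_n) : dot (- u) v = - dot u v.
Proof. by rewrite /dot -sumrN; apply: eq_bigr => i _; rewrite mxE mulNr. Qed.

Lemma dotBl n (u w v : 'cV[R]_n) : dot (u - w) v = dot u v - dot w v.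
Proof. by rewrite dotDl dotNl. Qed.

Lemma dotZl n a (u v : 'cV[R]_n) : dot (a *: u) v = a * dot u v.
Proof. by rewrite /dot mulr_sumr; apply: eq_bigr => i _; rewrite mxE mulrA. Qed.

Lemma dotNr n (u v : 'cV[R]_n) : dot v (- u) = - dot v u.
Proof. by rewrite ![dot v _]dotC dotNl. Qed.

Lemma dotDr n (u w v : 'cV[R]_n) : dot v (u + w) = dot v u + dot v w.
Proof. by rewrite ![dot v _]dotC dotDl. Qed.
Lemma dotBr n (u w v : 'cV[R]_n) : dot v (u - w) = dot v u - dot v w.
Proof. by rewrite ![dot v _]dotC dotBl. Qed.
Lemma dotZr n a (u v : 'cV[R]_n) : dot v (a *: u) = a * dot v u.
Proof. by rewrite ![dot v _]dotC dotZl. Qed.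

Lemma dot_mul k n (M : 'M[R]_(k, n)) (u : 'cV[R]_k) (v : 'cV[R]_n) : dot u (M *m v) = dot (M^T *m u) v.
Proof. by rewrite !dotE trmx_mul trmxK mulmxA. Qed.

Lemma dot_ge0 n (u : 'cV[R]_n) : 0 <= dot u u.
Proof. by apply: sumr_ge0 => i _; rewrite -expr2 sqr_ge0. Qed.

Lemma dot_gt0 n (u : 'cV[R]_n) : u != 0 -> 0 < dot u u.
Proof.
move=> nz; rewrite lt_neqAle dot_ge0 andbT; apply/negP => /eqP h.
move/negP: nz; apply; apply/eqP/matrixP => i j; rewrite (ord1 j) mxE.
move: h; rewrite /dot => /esym/eqP; rewrite psumr_eq0; last by move=> k _; rewrite -expr2 sqr_ge0.
by move/allP/(_ i (mem_index_enum _)) => /=; rewrite mulf_eq0 orbb => /eqP.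
Qed.

Lemma anorm2E n (A : 'M[R]_n) z : anorm2 A z = dot z (A *m z).
Proof. by rewrite /anorm2 dotE mulmxA. Qed.

Lemma pd_unit n (M : 'M[R]_n) : (forall z, z != 0 -> 0 < dot z (M *m z)) -> M \in unitmx.
Proof.
move=> pd; rewrite -row_free_unit -kermx_eq0; apply/negPn/negP => nz.
have [i hi] : exists i, row i (kermx M) != 0.
  case: (boolP [exists i, row i (kermx M) != 0]) => [/existsP //|/existsPn h].
  move/negP: nz; case.
  by apply/eqP/row_matrixP => i; rewrite row0; apply/eqP; have := h i; rewrite negbK.
have hv : row i (kermx M) *m M = 0 by apply/eqP; rewrite -sub_kermx row_sub.
have hz : (row i (kermx M))^T != 0 by rewrite trmx_eq0.
by have := pd _ hz; rewrite dotE trmxK mulmxA hv mul0mx mxE ltxx.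
Qed.

Lemma quad_disc (a b c : R) : 0 <= c -> (forall t, 0 <= a + 2 * t * b + t ^+ 2 * c) -> b ^+ 2 <= a * c.
Proof.
move=> c0 h; have [ce|cn0] := eqVneq c 0.
  subst c.
  have [->|bn0] := eqVneq b 0; first by rewrite expr0n mulr0.
  have := h (- (a + 1) / (2 * b)).
  have -> : 2 * (- (a + 1) / (2 * b)) * b = - (a + 1).
    by field.
  rewrite mulr0 mulr0; lra.
have cp : 0 < c by rewrite lt_neqAle eq_sym cn0.
have := h (- b / c).
have -> : a + 2 * (- b / c) * b + (- b / c) ^+ 2 * c = (a * c - b ^+ 2) / c by field.
move=> H; have := mulr_ge0 H c0; rewrite divfK // subr_ge0 //.
Qed.

Lemma sum_delta n (i : 'I_n) (F : 'I_n -> R) : \sum_k (k == i)%:R * F k = F i.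
Proof.
rewrite (bigD1 i) //= eqxx mul1r big1 ?addr0 // => k /negbTE ->; by rewrite mul0r.
Qed.

Lemma dot_delta n (i : 'I_n) v : dot (delta_mx i ord0) v = v i ord0.
Proof.
rewrite /dot -(sum_delta i (fun k => v k ord0)); apply: eq_bigr => k _.
by rewrite mxE eqxx andbT.
Qed.

Lemma mul_delta n (M : 'M[R]_n) j : M *m delta_mx j ord0 = col j M.
Proof.
apply/matrixP => k l; rewrite (ord1 l) !mxE.
rewrite -(sum_delta j (M k)); apply: eq_bigr => a _; rewrite mxE eqxx andbT mulrC.
by case: (a == j); rewrite ?mulr1 ?mulr0.
Qed.

Lemma sym_entry n (M : 'M[R]_n) i j : M^T = M -> M j i = M i j.
Proof. by move=> h; rewrite -{1}h mxE. Qed.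

Lemma quad_exp n (M : 'M[R]_n) (u v : 'cV[R]_n) : M^T = M ->
  dot (u + v) (M *m (u + v)) = dot u (M *m u) + 2 * dot u (M *m v) + dot v (M *m v).
Proof.
move=> s; rewrite mulmxDr !dotDl !dotDr.
have -> : dot v (M *m u) = dot u (M *m v) by rewrite dot_mul s dotC.
by rewrite mulr2n mulrDl mul1r !addrA.
Qed.

Lemma quad_sub n (M : 'M[R]_n) (u v : 'cV[R]_n) : M^T = M ->
  dot (u - v) (M *m (u - v)) = dot u (M *m u) - 2 * dot u (M *m v) + dot v (M *m v).
Proof. by move=> s; rewrite quad_exp // mulmxN !dotNr !dotNl opprK; ring. Qed.

Lemma CS n (M : 'M[R]_n) (a c : 'cV[R]_n) : M^T = M -> (forall z, 0 <= dot z (M *m z)) ->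
  dot a (M *m c) ^+ 2 <= dot a (M *m a) * dot c (M *m c).
Proof.
move=> s psd; apply: quad_disc => // t.
have := psd (a + t *: c); rewrite quad_exp // -!scalemxAr !dotZr !dotZl.
by rewrite !mulrA expr2 -!mulrA.
Qed.

Lemma pair_bound n (M : 'M[R]_n) (g : 'cV[R]_n) i j : M^T = M -> (forall z, 0 <= dot z (M *m z)) ->
  2 * (g i ord0 * g j ord0 * M i j) <= g j ord0 ^+ 2 * M i i + g i ord0 ^+ 2 * M j j.
Proof.
move=> s psd.
have := psd (g j ord0 *: delta_mx i ord0 + (- g i ord0) *: delta_mx j ord0).
rewrite quad_exp // -!scalemxAr !dotZl !dotZr !mul_delta !dot_delta !mxE (sym_entry j i s).
move=> h; lra.
Qed.

Lemma form_sum n (M : 'M[R]_n) g : dot g (M *m g) = \sum_i \sum_j g i ord0 * g j ord0 * M i j.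
Proof.
rewrite /dot; apply: eq_bigr => i _; rewrite mxE mulr_sumr; apply: eq_bigr => j _.
by rewrite mulrA mulrAC.
Qed.

Lemma trace_bound n (M : 'M[R]_n) (g : 'cV[R]_n) : M^T = M -> (forall z, 0 <= dot z (M *m z)) ->
  dot g (M *m g) <= (\sum_i M i i) * dot g g.
Proof.
move=> s psd.
suff : 2 * dot g (M *m g) <= 2 * ((\sum_i M i i) * dot g g) by rewrite ler_pM2l.
rewrite form_sum mulr_sumr.
apply: (@le_trans _ _ (\sum_i \sum_j (g j ord0 ^+ 2 * M i i + g i ord0 ^+ 2 * M j j))).
  by apply: ler_sum => i _; rewrite mulr_sumr; apply: ler_sum => j _; apply: pair_bound.
rewrite mulr2n mulrDl mul1r.
under eq_bigr do rewrite big_split /=.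
rewrite big_split /= /dot; apply: lerD.
  rewrite mulr_suml; apply: ler_sum => i _; rewrite mulr_sumr; apply: ler_sum => j _.
  by rewrite mulrC expr2.
rewrite mulrC mulr_suml; apply: ler_sum => i _; rewrite mulr_sumr.
by apply: ler_sum => j _; rewrite expr2.
Qed.


Lemma dot0l n (v : 'cV[R]_n) : dot 0 v = 0.
Proof. by rewrite /dot big1 // => i _; rewrite mxE mul0r. Qed.

Lemma coord_le n (z : 'cV[R]_n) i : z i ord0 ^+ 2 <= dot z z.
Proof.
rewrite /dot (bigD1 i) //= -expr2 lerDl; apply: sumr_ge0 => k _; rewrite -expr2 sqr_ge0 //.
Qed.

Lemma inv_form_bound n (N : 'M[R]_n) z :
  dot z (N *m z) <= (\sum_i \sum_j `|N i j|) * dot z z.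
Proof.
rewrite form_sum mulr_suml; apply: ler_sum => i _; rewrite mulr_suml; apply: ler_sum => j _.
apply: (le_trans (ler_norm _)); rewrite !normrM mulrC ler_wpM2l //.
have hi := coord_le z i; have hj := coord_le z j.
have a0 := normr_ge0 (z i ord0); have b0 := normr_ge0 (z j ord0).
rewrite -real_normK ?num_real // in hi; rewrite -real_normK ?num_real // in hj.
nra.
Qed.

Lemma rayleigh n (A : 'M[R]_n) : (0 < n)%N -> A^T = A ->
  (forall z, z != 0 -> 0 < dot z (A *m z)) ->
  exists mu, eigenvalue A mu /\ 0 <= mu /\ forall z, mu * dot z z <= dot z (A *m z).
Proof.
move=> n0 sA pdA.
pose S : classical_sets.set R := fun q => exists2 z : 'cV[R]_n, z != 0 & q = dot z (A *m z) / dot z z.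
have neS : classical_sets.nonempty S.
  have hz : delta_mx (Ordinal n0) (ord0 : 'I_1) != 0 :> 'cV[R]_n.
    apply/negP => /eqP /matrixP /(_ (Ordinal n0) ord0); rewrite !mxE !eqxx /=.
    by move/eqP; rewrite oner_eq0.
  by eexists; exists (delta_mx (Ordinal n0) ord0).
have lb0 : classical_sets.lbound S 0.
  move=> q [z zn0 ->]; apply: divr_ge0; [exact: ltW (pdA _ zn0)| exact: dot_ge0].
have hlb : classical_sets.has_lbound S by exists 0.
set mu := inf S.
have mu0 : 0 <= mu by apply: lb_le_inf.
have hb : forall z, mu * dot z z <= dot z (A *m z).
  move=> z; have [->|zn0] := eqVneq z 0; first by rewrite dot0l mulr0 dot0l.
  rewrite -ler_pdivlMr ?dot_gt0 //; apply: ge_inf => //; by exists z.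
exists mu; split; last by split.
rewrite /eigenvalue /eigenspace kermx_eq0 row_free_unit; apply/negP => Cu.
set C := A - mu%:M.
have sC : C^T = C by rewrite /C linearB /= tr_scalar_mx sA.
have CE : forall z, dot z (C *m z) = dot z (A *m z) - mu * dot z z.
  by move=> z; rewrite /C mulmxBl mul_scalar_mx dotBr dotZr.
have psdC : forall z, 0 <= dot z (C *m z) by move=> z; rewrite CE subr_ge0.
set K := \sum_i \sum_j `|invmx C i j| + 1.
have K0 : 0 < K.
  rewrite /K ltr_wpDl //; apply: sumr_ge0 => i _; apply: sumr_ge0 => j _; exact: normr_ge0.
have key : forall z, z != 0 -> dot z z <= dot z (C *m z) * K.
  move=> z zn0; have zz := dot_gt0 zn0.
  have cs : dot z (C *m (invmx C *m z)) ^+ 2 <= dot z (C *m z) * dot (invmx C *m z) (C *m (invmx C *m z)) by apply: CS.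
  rewrite !mulmxA mulmxV // !mul1mx [dot (invmx C *m z) z]dotC in cs.
  have bd := inv_form_bound (invmx C) z.
  have bd' : dot z (invmx C *m z) <= K * dot z z by apply: (le_trans bd); rewrite ler_wpM2r ?dot_ge0 // lerDl.
  have hc := psdC z.
  have h2 : dot z z ^+ 2 <= dot z (C *m z) * K * dot z z.
    apply: (le_trans cs); rewrite -mulrA ler_wpM2l //.
  rewrite expr2 ler_pM2r // in h2.
have : mu + K^-1 <= mu.
  apply: lb_le_inf => // q [z zn0 ->].
  rewrite ler_pdivlMr ?dot_gt0 // mulrDl.
  have := key z zn0; rewrite CE -ler_pdivrMr // => h.
  by rewrite [K^-1 * _]mulrC; lra.
by rewrite gerDl leNgt invr_gt0 K0.
Qed.

End S.

Import Order.TTheory GRing.Theory Num.Theory.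
Local Open Scope ring_scope.

Theorem theorem1 (R : realType) (n m : nat) (A : 'M[R]_n) (b x : 'cV[R]_n)
  (f : 'I_m -> 'I_n) (lmin : R) :
  spd A ->
  b - A *m x != 0 ->
  (1 <= m)%N -> (m <= n)%N ->
  injective f ->
  (forall (k : 'I_m) (j : 'I_n), j \notin [set f l | l in 'I_m] ->
      `|(b - A *m x) j ord0| <= `|(b - A *m x) (f k) ord0|) ->
  is_lambda_min A lmin ->
  let r := b - A *m x in
  let E := selmx R f in
  let y := invmx (E^T *m A *m E) *m (E^T *m r) in
  let xnew := x + E *m y in
  let d := invmx A *m b - x in
  let dnew := invmx A *m b - xnew in
  let sJr := \sum_(k < m) (r (f k) ord0) ^+ 2 in
  let sJa := \sum_(k < m) A (f k) (f k) in
  let sr := \sum_(k < n) (r k ord0) ^+ 2 in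
  anorm2 A d - anorm2 A dnew >= sJr / sJa /\
  anorm A dnew <= Num.sqrt (1 - lmin / sJa * (sJr / sr)) * anorm A d.
Proof.
move=> [sA pd0] rn0 m1 mn finj _ [eigl lminP] r E y xnew d dnew sJr sJa sr.
have pdA : forall z, z != 0 -> 0 < dot z (A *m z) by move=> z /pd0; rewrite -anorm2E.
have psdA : forall z, 0 <= dot z (A *m z).
  by move=> z; have [->|/pdA/ltW //] := eqVneq z 0; rewrite dot0l.
have Au : A \in unitmx by apply: pd_unit.
have Ad : A *m d = r by rewrite /d mulmxBr mulmxA mulmxV // mul1mx.
have dnewE : dnew = d - E *m y by rewrite /dnew /xnew /d opprD addrA.
set B := E^T *m A *m E.
set g := E^T *m r.
have Ent : forall (i : 'I_n) k, E i k = (i == f k)%:R by move=> i k; rewrite mxE.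
have Ez : forall (z : 'cV[R]_m) k, (E *m z) (f k) ord0 = z k ord0.
  move=> z k; rewrite mxE -(sum_delta k (fun l => z l ord0)); apply: eq_bigr => l _.
  by rewrite Ent (inj_eq finj) eq_sym.
have Enz : forall z : 'cV[R]_m, z != 0 -> E *m z != 0.
  move=> z; apply: contra => /eqP h; apply/eqP/matrixP => k j.
  by rewrite (ord1 j) -Ez h !mxE.
have sB : B^T = B.
  rewrite /B !trmx_mul sA mulmxA; congr (_ *m _); apply/matrixP => i j; by rewrite !mxE.
have quadB : forall z, dot z (B *m z) = dot (E *m z) (A *m (E *m z)).
  by move=> z; rewrite /B -!mulmxA dot_mul trmxK.
have pdB : forall z, z != 0 -> 0 < dot z (B *m z) by move=> z zn0; rewrite quadB pdA ?Enz.
have psdB : forall z, 0 <= dot z (B *m z) by move=> z; rewrite quadB psdA.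
have Bu : B \in unitmx by apply: pd_unit.
have By : B *m y = g by rewrite /y mulmxA mulmxV // mul1mx.
have gE : forall k, g k ord0 = r (f k) ord0.
  move=> k; rewrite mxE -(sum_delta (f k) (fun i => r i ord0)); apply: eq_bigr => i _.
  by rewrite mxE Ent.
have BE : forall k, B k k = A (f k) (f k).
  move=> k; rewrite mxE; under eq_bigr do rewrite Ent mulrC.
  rewrite sum_delta mxE; under eq_bigr do rewrite mxE Ent.
  by rewrite sum_delta.
have sJrE : sJr = dot g g by rewrite /sJr /dot; apply: eq_bigr => k _; rewrite gE expr2.
have sJaE : sJa = \sum_k B k k by apply: eq_bigr => k _; rewrite BE.
have srE : sr = dot r r by rewrite /sr /dot; apply: eq_bigr => k _; rewrite expr2.
have Aii : forall i, 0 < A i i.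
  move=> i; have hz : delta_mx i ord0 != 0 :> 'cV[R]_n.
    apply/negP => /eqP /matrixP /(_ i ord0); rewrite !mxE !eqxx /=.
    by move/eqP; rewrite oner_eq0.
  by have := pdA _ hz; rewrite mul_delta dot_delta mxE.
have sJa0 : 0 < sJa.
  rewrite /sJa (bigD1 (Ordinal m1)) //=; apply: (lt_le_trans (Aii (f (Ordinal m1)))).
  by rewrite lerDl; apply: sumr_ge0 => k _; apply: ltW.
have part1 : anorm2 A d - anorm2 A dnew = dot y (B *m y).
  have qm : forall u v : 'cV[R]_n, dot (u - v) (A *m (u - v)) = dot u (A *m u) - 2 * dot u (A *m v) + dot v (A *m v).
    by move=> u v; rewrite quad_exp // mulmxN !dotNr !dotNl opprK; ring.
  rewrite !anorm2E dnewE (qm d (E *m y)) (dot_mul A d (E *m y)) sA Ad -quadB.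
  have -> : dot r (E *m y) = dot y (B *m y) by rewrite By /g dot_mul dotC.
  ring.
have hq : sJr / sJa <= dot y (B *m y).
  set t := sJa^-1.
  have t0 : 0 <= t by rewrite invr_ge0 ltW.
  have tT : t * sJa = 1 by rewrite mulVf // gt_eqF.
  have h0 := psdB (y - t *: g).
  rewrite quad_sub // -!scalemxAr !dotZr !dotZl (dot_mul B y g) sB By in h0.
  have tb := trace_bound g sB psdB.
  rewrite -sJaE -sJrE in tb.
  have h1 : t * (t * dot g (B *m g)) <= t * dot g g.
    apply: (le_trans (ler_wpM2l t0 (ler_wpM2l t0 tb))).
    by rewrite [t * (sJa * sJr)]mulrA tT mul1r sJrE.
  rewrite sJrE mulrC By; lra.
have n0 : (0 < n)%N by apply: leq_trans mn.
have [mu [eigmu [mu0 hb]]] := rayleigh n0 sA pdA.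
have lm : lmin <= mu := lminP _ eigmu.
set D := anorm2 A d.
have D0 : 0 <= D by rewrite /D anorm2E.
have keyD : lmin * D <= sr.
  apply: (le_trans (ler_wpM2r D0 lm)).
  rewrite srE -Ad /D anorm2E.
  have e := dot_ge0 (A *m d - mu *: d).
  rewrite dotBl !dotBr !dotZl !dotZr [dot (A *m d) d]dotC in e.
  have hbd := hb d.
  have h : 0 <= mu * (dot d (A *m d) - mu * dot d d) by rewrite mulr_ge0 // subr_ge0.
  rewrite mulrBr in h.
  lra.
have sr0 : 0 < sr by rewrite srE dot_gt0.
have Dn0 : 0 <= anorm2 A dnew by rewrite anorm2E.
set k := 1 - lmin / sJa * (sJr / sr).
have c0 : 0 <= sJr / sJa by apply: divr_ge0; [rewrite sJrE dot_ge0 | exact: ltW].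
have hl : lmin * D / sr <= 1 by rewrite ler_pdivrMr // mul1r.
have hc : sJr / sJa * (lmin * D / sr) <= sJr / sJa by apply: ler_piMr.
have kD : k * D = D - sJr / sJa * (lmin * D / sr) by rewrite /k; ring.
have hDn : anorm2 A dnew <= k * D by rewrite kD; move: hq; rewrite -part1 -/D; lra.
split; first by rewrite part1.
rewrite /anorm; have [k0|kn] := leP 0 k.
  by rewrite -sqrtrM // ler_sqrt // mulr_ge0.
have kD0 : k * D <= 0 by rewrite mulr_le0_ge0 // ltW.
have -> : anorm2 A dnew = 0 by apply/eqP; rewrite eq_le Dn0 andbT (le_trans hDn kD0).
by rewrite sqrtr0 mulr_ge0 // sqrtr_ge0.
Qed.
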